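(* Let $a,b>0$, $\delta>0$, $\theta\in[0,1]$, $\mathcal{X}=\{x\in\mathbb{R}^d:\|x\|_\infty\le b\}$, and for $i\in[d]$, $x\in\mathcal{X}$ let $f_i^+(x)=\theta b|x(i)+b|+\frac{1-\theta}4(x(i)+b)^2$ and $f_i^-(x)=\theta b|x(i)-b|+\frac{1-\theta}4(x(i)-b)^2$. For $v\in\{-1,1\}^d$ let \[ g_v(x)=a\sum_{i=1}^d\Big(\frac{1+2\delta v(i)}2f_i^+(x)+\frac{1-2\delta v(i)}2f_i^-(x)\Big), \] and $\mathcal{G}_{\mathtt{sc}}=\{g_v:v\in\{-1,1\}^d\}$, decomposed coordinatewise as $g_v(x)=\sum_ig_{i,v(i)}(x(i))$ with, for $\nu\in\{-1,1\}$ and $y\in\mathcal{X}_i=[-b,b]$, $g_{i,\nu}(y)=a\big(\frac{1+2\delta\nu}2(\theta b|y+b|+\frac{1-\theta}4(y+b)^2)+\frac{1-2\delta\nu}2(\theta b|y-b|+\frac{1-\theta}4(y-b)^2)\big)$. If $\frac{1-\theta}{1+\theta}\ge2\delta$, then \[ \psi(\mathcal{G}_{\mathtt{sc}})\ \ge\ \frac{2ab^2\delta^2}{1-\theta}. \]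
   Context: For such a decomposable family, $\psi_i(\mathcal{G})=\min_{y\in\mathcal{X}_i}\big(g_{i,1}(y)+g_{i,-1}(y)-(\min_{y'\in\mathcal{X}_i}g_{i,1}(y')+\min_{y'\in\mathcal{X}_i}g_{i,-1}(y'))\big)$ and $\psi(\mathcal{G})=\min_{i\in[d]}\psi_i(\mathcal{G})$. *)

(* Defs.v *)
From HB Require Import structures.
From mathcomp Require Import all_boot all_order all_algebra.
From mathcomp Require Import all_classical all_reals.
Set Implicit Arguments. Unset Strict Implicit. Unset Printing Implicit Defensive.
Import Order.TTheory GRing.Theory Num.Theory.
Local Open Scope classical_set_scope.
Local Open Scope ring_scope.

Definition Xcoord (R : realType) (b : R) : set R := [set y : R | -b <= y <= b].

(* Minimum of f over A (the infimum; it is attained in our uses since the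
   functions are continuous and A is compact). *)
Definition min_over (R : realType) (A : set R) (f : R -> R) : R := inf (f @` A).

(* f_i^+ and f_i^- as functions of the coordinate y = x(i). *)
Definition fplus (R : realType) (b theta y : R) : R :=
  theta * b * `|y + b| + (1 - theta) / 4 * (y + b) ^+ 2.
Definition fminus (R : realType) (b theta y : R) : R :=
  theta * b * `|y - b| + (1 - theta) / 4 * (y - b) ^+ 2.

Definition g_sc (R : realType) (a b delta theta nu y : R) : R :=
  a * ((1 + 2 * delta * nu) / 2 * fplus b theta y
       + (1 - 2 * delta * nu) / 2 * fminus b theta y).

Definition g_v (R : realType) (d : nat) (a b delta theta : R)
  (v : 'I_d -> R) (x : 'I_d -> R) : R :=
  \sum_(i < d) g_sc a b delta theta (v i) (x i).

Definition psi_i (R : realType) (d : nat) (X : 'I_d -> set R)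
  (g : 'I_d -> R -> R -> R) (i : 'I_d) : R :=
  min_over (X i) (fun y => g i 1 y + g i (-1) y
                           - (min_over (X i) (g i 1) + min_over (X i) (g i (-1)))).

(* psi(G) = min_{i in [d]} psi_i(G)  (d >= 1, so the minimum over a finite
   nonempty set is its infimum). *)
Definition psi (R : realType) (d : nat) (X : 'I_d -> set R)
  (g : 'I_d -> R -> R -> R) : R :=
  inf [set psi_i X g i | i in [set: 'I_d]].

(* Main.v *)
Require Import Defs.
From HB Require Import structures.
From mathcomp Require Import all_boot all_order all_algebra.
From mathcomp Require Import all_classical all_reals.
From mathcomp Require Import ring lra.
Import Order.TTheory GRing.Theory Num.Theory.
Local Open Scope classical_set_scope.
Local Open Scope ring_scope.

Section S.
Variables (R : realType) (a b delta theta : R).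

Lemma gform nu y : -b <= y <= b ->
  g_sc a b delta theta nu y =
  a * (theta * b ^+ 2 + (1 - theta) / 4 * (y ^+ 2 + b ^+ 2)
       + delta * b * (1 + theta) * nu * y).
Proof.
move=> /andP[h1 h2]; rewrite /g_sc /fplus /fminus.
rewrite (ger0_norm (x := y + b)); last by lra.
rewrite (ler0_norm (x := y - b)); last by lra.
field. all: try by [].
Qed.

Lemma min_ub nu : nu ^+ 2 = 1 -> 0 < a -> 0 < b -> 0 < delta -> 0 <= theta -> theta < 1 ->
  2 * delta * (1 + theta) <= 1 - theta ->
  min_over (Xcoord b) (g_sc a b delta theta nu) <=
  a * (theta * b ^+ 2 + (1 - theta) / 4 * b ^+ 2
       - delta ^+ 2 * b ^+ 2 * (1 + theta) ^+ 2 / (1 - theta)).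
Proof.
move=> nu2 ha hb hd ht0 ht hh.
have tn0 : 1 - theta != 0 by rewrite subr_eq0 gt_eqF.
have tp : 0 < 1 - theta by rewrite subr_gt0.
set ys := - (2 * delta * b * (1 + theta) * nu / (1 - theta)).
have hnu : `|nu| = 1.
  by apply/eqP; rewrite -(@eqrXn2 _ 2) ?normr_ge0 // real_normK ?num_real // nu2 expr1n.
have Xys : Xcoord b ys.
  rewrite /Xcoord /= -ler_norml /ys normrN normrM normfV (gtr0_norm tp).
  rewrite ler_pdivrMr // !normrM hnu mulr1 (gtr0_norm hb) (gtr0_norm hd).
  rewrite (ger0_norm (x := 1 + theta)); last by lra.
  rewrite (ger0_norm (x := 2)) //; nra.
apply: le_trans (_ : g_sc a b delta theta nu ys <= _).
  apply: ge_inf; last by exists ys.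
  exists (a * (theta * b ^+ 2 + (1 - theta) / 4 * b ^+ 2
       - delta ^+ 2 * b ^+ 2 * (1 + theta) ^+ 2 / (1 - theta))).
  move=> _ [y Xy <-]; rewrite gform //.
  rewrite ler_pM2l //.
  have e : theta * b ^+ 2 + (1 - theta) / 4 * (y ^+ 2 + b ^+ 2) +
      delta * b * (1 + theta) * nu * y -
      (theta * b ^+ 2 + (1 - theta) / 4 * b ^+ 2 -
       delta ^+ 2 * b ^+ 2 * (1 + theta) ^+ 2 / (1 - theta))
      = (1 - theta) / 4 * (y - ys) ^+ 2.
    rewrite /ys; field: nu2; by [].
  rewrite -subr_ge0 e; apply: mulr_ge0; last exact: sqr_ge0.
  by apply: divr_ge0 => //; apply: ltW.
rewrite gform // ler_pM2l //.
rewrite le_eqVlt; apply/orP; left; apply/eqP; rewrite /ys; field: nu2; by [].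
Qed.
End S.

Theorem lemma5 (R : realType) (d : nat) (a b delta theta : R) :
  (0 < d)%N -> 0 < a -> 0 < b -> 0 < delta -> 0 <= theta <= 1 ->
  (1 - theta) / (1 + theta) >= 2 * delta ->
  psi (fun _ : 'I_d => Xcoord b) (fun _ nu y => g_sc a b delta theta nu y)
    >= 2 * a * b ^+ 2 * delta ^+ 2 / (1 - theta).
Proof.
move=> d0 ha hb hd /andP[t0 t1] hh.
have ht : theta < 1.
  rewrite lt_neqAle t1 andbT; apply/eqP => e; move: hh.
  by rewrite e subrr mul0r; lra.
have hh' : 2 * delta * (1 + theta) <= 1 - theta.
  by rewrite -ler_pdivlMr //; lra.
have tp : 0 < 1 - theta by rewrite subr_gt0.
have tn0 : 1 - theta != 0 by rewrite gt_eqF.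
set B := 2 * a * b ^+ 2 * delta ^+ 2 / (1 - theta).
set K := delta ^+ 2 * b ^+ 2 * (1 + theta) ^+ 2 / (1 - theta).
have B0 : 0 <= B.
  rewrite /B; apply: divr_ge0; last exact: ltW.
  apply: mulr_ge0; last exact: sqr_ge0.
  apply: mulr_ge0; last exact: sqr_ge0.
  lra.
have BK : B <= 2 * a * K.
  have -> : 2 * a * K = B * (1 + theta) ^+ 2 by rewrite /K /B; field.
  rewrite expr2; nra.
have m1 := @min_ub R a b delta theta 1 (expr1n _ _) ha hb hd t0 ht hh'.
have m2 := @min_ub R a b delta theta (-1) (ltac:(by rewrite sqrrN expr1n)) ha hb hd t0 ht hh'.
rewrite -/K in m1 m2.
apply: lb_le_inf.
  by exists (psi_i (fun _ : 'I_d => Xcoord b)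
     (fun _ nu y => g_sc a b delta theta nu y) (Ordinal d0)); exists (Ordinal d0).
move=> _ [i _ <-]; rewrite /psi_i.
apply: lb_le_inf.
  exists (g_sc a b delta theta 1 0 + g_sc a b delta theta (-1) 0 -
    (min_over (Xcoord b) (g_sc a b delta theta 1) +
     min_over (Xcoord b) (g_sc a b delta theta (-1)))).
  by exists 0 => //; rewrite /Xcoord /=; lra.
move=> _ [y Xy <-].
apply: (le_trans BK).
apply: le_trans (_ : _ <= g_sc a b delta theta 1 y + g_sc a b delta theta (-1) y -
   (a * (theta * b ^+ 2 + (1 - theta) / 4 * b ^+ 2 - K) +
    a * (theta * b ^+ 2 + (1 - theta) / 4 * b ^+ 2 - K))) _; last first.
  by rewrite lerB // lerD.
rewrite !gform //.
have -> : a * (theta * b ^+ 2 + (1 - theta) / 4 * (y ^+ 2 + b ^+ 2) +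
      delta * b * (1 + theta) * 1 * y) +
   a * (theta * b ^+ 2 + (1 - theta) / 4 * (y ^+ 2 + b ^+ 2) +
      delta * b * (1 + theta) * -1 * y) -
   (a * (theta * b ^+ 2 + (1 - theta) / 4 * b ^+ 2 - K) +
    a * (theta * b ^+ 2 + (1 - theta) / 4 * b ^+ 2 - K))
   = 2 * a * K + a * ((1 - theta) / 2 * y ^+ 2) by field.
rewrite lerDl; apply: mulr_ge0; first exact: ltW.
by apply: mulr_ge0; [apply: divr_ge0; [apply: ltW|]|apply: sqr_ge0].
Qed.
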